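(* Let $X$ be a Stone space and $G$ a non-archimedean topological group which is a topological subgroup of $\mathrm{Homeo}(X)$. Then the topological group $$M(\psi)=H_X\rtimes_\pi G=((\mathbb{Z}_2\oplus V)\rtimes V^* )\rtimes_\pi G,$$ where $\pi(g,(a,A,f))=(a,g(A),gf)$ with $(gf)(B)=f(g^{-1}(B))$, is a non-archimedean minimal group.
   Context: A Stone space is a compact zero-dimensional Hausdorff space; $\mathrm{Homeo}(X)$ has the compact-open topology. $V=C(X,\mathbb{Z}_2)$ is the discrete group of clopen subsets of $X$ under symmetric difference; $V^*=\mathrm{Hom}(V,\mathbb{Z}_2)$ has the pointwise topology (compact). $H_X$ is $\mathbb{Z}_2\times V\times V^*$ with product topology and multiplication $(a_1,x_1,f_1)(a_2,x_2,f_2)=(a_1+a_2+f_1(x_2),x_1+x_2,f_1+f_2)$. For a group $H$ on which $G$ acts by automorphisms, $H\rtimes G$ is $H\times G$ with product topology and multiplication $(h_1,g_1)(h_2,g_2)=(h_1\cdot g_1h_2,g_1g_2)$. A Hausdorff topological group is minimal if it admits no strictly coarser Hausdorff group topology; it is non-archimedean if it has a local base at the identity of open subgroups. *)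

(* Defs.v *)
From Stdlib Require Import Bool List FunctionalExtensionality ProofIrrelevance
  PropExtensionality Classical.
Set Implicit Arguments.

Definition set (T : Type) := T -> Prop.

Definition is_topology (T : Type) (O : set (set T)) : Prop :=
  O (fun _ => True) /\
  (forall A B, O A -> O B -> O (fun x => A x /\ B x)) /\
  (forall F : set (set T), (forall A, F A -> O A) ->
     O (fun x => exists A, F A /\ A x)).

Record topology (T : Type) := Topology {
  open :> set (set T);
  open_is_topology : is_topology open }.

Definition discrete_top (T : Type) : set (set T) := fun _ => True.

Definition continuous (T1 T2 : Type) (O1 : set (set T1)) (O2 : set (set T2))
  (f : T1 -> T2) : Prop :=
  forall U, O2 U -> O1 (fun x => U (f x)).

Definition prod_top (T1 T2 : Type) (O1 : set (set T1)) (O2 : set (set T2))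
  : set (set (T1 * T2)) :=
  fun W => forall p, W p -> exists A B, O1 A /\ O2 B /\ A (fst p) /\ B (snd p) /\
     (forall q, A (fst q) -> B (snd q) -> W q).

Definition gen_top (T : Type) (S : set (set T)) : set (set T) :=
  fun W => forall x, W x -> exists l : list (set T),
     (forall B, In B l -> S B) /\ (forall B, In B l -> B x) /\
     (forall y, (forall B, In B l -> B y) -> W y).

Definition sub_top (T : Type) (P : T -> Prop) (O : set (set T))
  : set (set {x : T | P x}) :=
  fun W => exists W', O W' /\ forall y, W y <-> W' (proj1_sig y).

Definition hausdorff (T : Type) (O : set (set T)) : Prop :=
  forall x y, x <> y -> exists U V, O U /\ O V /\ U x /\ V y /\
    (forall z, U z -> V z -> False).

Definition compact_set (T : Type) (O : set (set T)) (K : set T) : Prop :=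
  forall F : set (set T), (forall A, F A -> O A) ->
    (forall x, K x -> exists A, F A /\ A x) ->
    exists l : list (set T), (forall A, In A l -> F A) /\
      (forall x, K x -> exists A, In A l /\ A x).

Definition clopen (T : Type) (O : set (set T)) (C : set T) : Prop :=
  O C /\ O (fun x => ~ C x).

Definition zero_dimensional (T : Type) (O : set (set T)) : Prop :=
  forall U x, O U -> U x -> exists C, clopen O C /\ C x /\ (forall y, C y -> U y).

Definition stone_space (T : Type) (O : set (set T)) : Prop :=
  compact_set O (fun _ => True) /\ hausdorff O /\ zero_dimensional O.

Definition is_topological_group (T : Type) (mul : T -> T -> T) (inv : T -> T)
  (O : set (set T)) : Prop :=
  is_topology O /\
  continuous (prod_top O O) O (fun p => mul (fst p) (snd p)) /\
  continuous O O inv.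

Definition is_subgroup (T : Type) (mul : T -> T -> T) (inv : T -> T) (e : T)
  (W : set T) : Prop :=
  W e /\ (forall x y, W x -> W y -> W (mul x y)) /\ (forall x, W x -> W (inv x)).

Definition non_archimedean (T : Type) (mul : T -> T -> T) (inv : T -> T) (e : T)
  (O : set (set T)) : Prop :=
  forall U, O U -> U e -> exists W, O W /\ is_subgroup mul inv e W /\
    (forall x, W x -> U x).

Definition minimal_group (T : Type) (mul : T -> T -> T) (inv : T -> T)
  (O : set (set T)) : Prop :=
  is_topological_group mul inv O /\ hausdorff O /\
  forall O' : set (set T), is_topology O' -> (forall U, O' U -> O U) ->
    is_topological_group mul inv O' -> hausdorff O' ->
    forall U, O U -> O' U.

Lemma open_ext (T : Type) (O : set (set T)) (A B : set T) :
  (forall x, A x <-> B x) -> O A -> O B.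
Proof.
  intros H HA. replace B with A; [exact HA|].
  apply functional_extensionality; intro x; apply propositional_extensionality; apply H.
Qed.

Section Stone.
Variables (X : Type) (tX : topology X).

Record homeo := Homeo {
  hf : X -> X;
  hg : X -> X;
  hfg : forall x, hf (hg x) = x;
  hgf : forall x, hg (hf x) = x;
  hf_cont : continuous tX tX hf;
  hg_cont : continuous tX tX hg }.

Lemma continuous_comp (f g : X -> X) :
  continuous tX tX f -> continuous tX tX g -> continuous tX tX (fun x => f (g x)).
Proof. intros Hf Hg U HU. exact (Hg _ (Hf U HU)). Qed.

Lemma continuous_id : continuous tX tX (fun x => x).
Proof. intros U HU; exact HU. Qed.

Definition hcomp (a b : homeo) : homeo.
Proof.
  refine (@Homeo (fun x => hf a (hf b x)) (fun x => hg b (hg a x)) _ _ _ _).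
  - intro x; rewrite hfg, hfg; reflexivity.
  - intro x; rewrite hgf, hgf; reflexivity.
  - apply continuous_comp; [apply hf_cont | apply hf_cont].
  - apply continuous_comp; [apply hg_cont | apply hg_cont].
Defined.

Definition hinv (a : homeo) : homeo :=
  @Homeo (hg a) (hf a) (hgf a) (hfg a) (hg_cont a) (hf_cont a).

Definition hid : homeo :=
  @Homeo (fun x => x) (fun x => x) (fun x => eq_refl) (fun x => eq_refl)
    continuous_id continuous_id.

Definition compact_open_top : set (set homeo) :=
  gen_top (fun S => exists K U, compact_set tX K /\ open tX U /\
     forall h, S h <-> (forall x, K x -> U (hf h x))).

Record hsubgroup := HSubgroup {
  inG : homeo -> Prop;
  inG_id : inG hid;
  inG_comp : forall a b, inG a -> inG b -> inG (hcomp a b);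
  inG_inv : forall a, inG a -> inG (hinv a) }.

Section G.
Variable G : hsubgroup.
Definition Gt := {h : homeo | inG G h}.
Definition Gmul (a b : Gt) : Gt :=
  exist _ (hcomp (proj1_sig a) (proj1_sig b))
    (@inG_comp G _ _ (proj2_sig a) (proj2_sig b)).
Definition Ginv (a : Gt) : Gt := exist _ (hinv (proj1_sig a)) (@inG_inv G _ (proj2_sig a)).
Definition Gone : Gt := exist _ hid (inG_id G).
Definition G_top : set (set Gt) := sub_top (inG G) compact_open_top.
End G.

(** * V = C(X, Z2) (clopen sets, via indicator functions), under symmetric difference *)
Definition V := {A : X -> bool | continuous tX (@discrete_top bool) A}.

Lemma V_eq (A B : V) : (forall x, proj1_sig A x = proj1_sig B x) -> A = B.
Proof.
  destruct A as [a Ha], B as [b Hb]; simpl; intro H.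
  assert (a = b) by (apply functional_extensionality; exact H). subst b.
  f_equal; apply proof_irrelevance.
Qed.

Lemma xor_cont (a b : X -> bool) :
  continuous tX (@discrete_top bool) a -> continuous tX (@discrete_top bool) b ->
  continuous tX (@discrete_top bool) (fun x => xorb (a x) (b x)).
Proof.
  intros Ha Hb U _.
  destruct (open_is_topology tX) as [_ [Hi Hu]].
  apply open_ext with (A := fun x => exists S,
     (exists u v, U (xorb u v) /\ S = (fun y => a y = u /\ b y = v)) /\ S x).
  - intro x; split.
    + intros [S [[u [v [HU ->]]] [Hx Hy]]]; rewrite Hx, Hy; exact HU.
    + intro HU. exists (fun y => a y = a x /\ b y = b x); split; [|split; reflexivity].
      exists (a x), (b x); split; [exact HU | reflexivity].
  - apply Hu. intros S [u [v [_ ->]]]. apply Hi.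
    + apply (Ha (fun w => w = u)); exact I.
    + apply (Hb (fun w => w = v)); exact I.
Qed.

Definition vadd (A B : V) : V :=
  exist _ (fun x => xorb (proj1_sig A x) (proj1_sig B x))
    (xor_cont (proj2_sig A) (proj2_sig B)).

Lemma const_cont (c : bool) : continuous tX (@discrete_top bool) (fun _ : X => c).
Proof.
  intros U _. destruct (open_is_topology tX) as [HT [_ Hu]].
  destruct (classic (U c)) as [H|H].
  - apply open_ext with (A := fun _ => True); [intro; split; auto | exact HT].
  - apply open_ext with (A := fun x => exists S : set X, False /\ S x).
    + intro x; split; [intros [S [[] _]] | intro Hc; contradiction].
    + apply Hu; intros A [].
Qed.

Definition vzero : V := exist _ (fun _ => false) (const_cont false).

(* action of a homeomorphism on V: g(A) = image of A = A o g^{-1} *)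
Definition vact (g : homeo) (A : V) : V :=
  exist (fun a => continuous tX (@discrete_top bool) a) (fun x => proj1_sig A (hg g x))
    (fun U HU => hg_cont g _ (proj2_sig A U HU)).

Definition Vs := {f : V -> bool | forall A B, f (vadd A B) = xorb (f A) (f B)}.

Lemma Vs_eq (f h : Vs) : (forall A, proj1_sig f A = proj1_sig h A) -> f = h.
Proof.
  destruct f as [f Hf], h as [h Hh]; simpl; intro H.
  assert (f = h) by (apply functional_extensionality; exact H). subst h.
  f_equal; apply proof_irrelevance.
Qed.

Definition vsadd (f h : Vs) : Vs.
Proof.
  refine (exist _ (fun A => xorb (proj1_sig f A) (proj1_sig h A)) _).
  intros A B. rewrite (proj2_sig f), (proj2_sig h).
  destruct (proj1_sig f A), (proj1_sig f B), (proj1_sig h A), (proj1_sig h B);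
    reflexivity.
Defined.

Definition vszero : Vs :=
  exist (fun f : V -> bool => forall A B, f (vadd A B) = xorb (f A) (f B))
    (fun _ => false) (fun _ _ => eq_refl).

Lemma vact_add (g : homeo) (A B : V) : vact g (vadd A B) = vadd (vact g A) (vact g B).
Proof. apply V_eq; intro x; reflexivity. Qed.

Definition vsact (g : homeo) (f : Vs) : Vs.
Proof.
  refine (exist _ (fun B => proj1_sig f (vact (hinv g) B)) _).
  intros A B. rewrite vact_add. apply (proj2_sig f).
Defined.

(* pointwise topology on V* (initial topology of the evaluations into discrete Z2) *)
Definition Vs_top : set (set Vs) :=
  gen_top (fun S => exists (A : V) (b : bool), forall f, S f <-> proj1_sig f A = b).

Definition HX := (bool * V * Vs)%type.

Definition HXmul (p q : HX) : HX :=
  match p, q with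
  | (a1, x1, f1), (a2, x2, f2) =>
      (xorb (xorb a1 a2) (proj1_sig f1 x2), vadd x1 x2, vsadd f1 f2)
  end.

Definition HXinv (p : HX) : HX :=
  match p with (a, x, f) => (xorb a (proj1_sig f x), x, f) end.

Definition HXone : HX := (false, vzero, vszero).

Definition pi_act (g : homeo) (p : HX) : HX :=
  match p with (a, x, f) => (a, vact g x, vsact g f) end.

Definition HX_top : set (set HX) :=
  prod_top (prod_top (@discrete_top bool) (@discrete_top V)) Vs_top.

Section M.
Variable G : hsubgroup.
Definition Mt := (HX * Gt G)%type.

Definition Mmul (p q : Mt) : Mt :=
  (HXmul (fst p) (pi_act (proj1_sig (snd p)) (fst q)), Gmul (snd p) (snd q)).

Definition Minv (p : Mt) : Mt :=
  (pi_act (hinv (proj1_sig (snd p))) (HXinv (fst p)), Ginv (snd p)).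

Definition Mone : Mt := (HXone, @Gone G).

Definition M_top : set (set Mt) := prod_top HX_top (@G_top G).
End M.

End Stone.

(* Main.v *)
Require Import Defs.
From Stdlib Require Import Bool List FunctionalExtensionality ProofIrrelevance PropExtensionality Classical ClassicalEpsilon Btauto.

Set Implicit Arguments.

Lemma top_full T (O : set (set T)) : is_topology O -> O (fun _ => True).
Proof. intros [H _]; exact H. Qed.

Lemma top_inter T (O : set (set T)) A B : is_topology O -> O A -> O B -> O (fun x => A x /\ B x).
Proof. intros [_ [H _]]; apply H. Qed.

Lemma top_union T (O : set (set T)) F : is_topology O -> (forall A, F A -> O A) ->
  O (fun x => exists A, F A /\ A x).
Proof. intros [_ [_ H]]; apply H. Qed.

Lemma top_local T (O : set (set T)) (U : set T) : is_topology O ->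
  (forall x, U x -> exists A, O A /\ A x /\ forall y, A y -> U y) -> O U.
Proof.
  intros HO H.
  apply open_ext with (A := fun x => exists A, (O A /\ forall y, A y -> U y) /\ A x).
  - intro x; split.
    + intros [A [[_ HA] Ax]]; auto.
    + intro Ux; destruct (H x Ux) as [A [OA [Ax HA]]]; exists A; auto.
  - apply top_union; auto. intros A [OA _]; auto.
Qed.

Lemma list_inter T (O : set (set T)) (e : T) (Idx : Type) (Q : Idx -> set T -> Prop) (l : list Idx) :
  is_topology O ->
  (forall i A B, (forall x, B x -> A x) -> Q i A -> Q i B) ->
  (forall i, In i l -> exists A, O A /\ A e /\ Q i A) ->
  exists W, O W /\ W e /\ forall i, In i l -> Q i W.
Proof.
  intros HO Hm; induction l as [|i l IH]; intro H.
  - exists (fun _ => True); split; [apply top_full; auto|split; [exact I|]].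
    intros i [].
  - destruct IH as [W [OW [We HW]]]. { intros j Hj; apply H; right; auto. }
    destruct (H i (or_introl eq_refl)) as [A [OA [Ae HA]]].
    exists (fun x => A x /\ W x); split; [apply top_inter; auto|split; [auto|]].
    intros j [<-|Hj].
    + apply Hm with A; [tauto|auto].
    + apply Hm with W; [tauto|auto].
Qed.

Lemma discrete_is T : is_topology (@discrete_top T).
Proof. unfold discrete_top; repeat split; auto. Qed.

Lemma prod_top_is T1 T2 (O1 : set (set T1)) (O2 : set (set T2)) :
  is_topology O1 -> is_topology O2 -> is_topology (prod_top O1 O2).
Proof.
  intros H1 H2; split; [|split].
  - intros p _. exists (fun _ => True), (fun _ => True); repeat split; apply top_full; auto.
  - intros A B HA HB p [Ap Bp].
    destruct (HA p Ap) as [A1 [B1 [OA1 [OB1 [A1p [B1p K1]]]]]].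
    destruct (HB p Bp) as [A2 [B2 [OA2 [OB2 [A2p [B2p K2]]]]]].
    exists (fun x => A1 x /\ A2 x), (fun x => B1 x /\ B2 x).
    split; [apply top_inter; auto|]. split; [apply top_inter; auto|].
    split; [split; auto|]. split; [split; auto|]. intros r [] []; split; auto.
  - intros F HF p [A [FA Ap]].
    destruct (HF A FA p Ap) as [A1 [B1 [OA1 [OB1 [A1p [B1p K1]]]]]].
    exists A1, B1; repeat split; auto. intros q a b; exists A; auto.
Qed.

Lemma gen_top_is T (S : set (set T)) : is_topology (gen_top S).
Proof.
  split; [|split].
  - intros x _; exists nil; simpl; repeat split; tauto.
  - intros A B HA HB x [Ax Bx].
    destruct (HA x Ax) as [l1 [S1 [X1 Y1]]]; destruct (HB x Bx) as [l2 [S2 [X2 Y2]]].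
    exists (l1 ++ l2); split; [|split].
    + intros C HC; apply in_app_or in HC; destruct HC as [HC|HC]; [apply S1|apply S2]; exact HC.
    + intros C HC; apply in_app_or in HC; destruct HC as [HC|HC]; [apply X1|apply X2]; exact HC.
    + intros y H; split.
      * apply Y1; intros C HC; apply H; apply in_or_app; auto.
      * apply Y2; intros C HC; apply H; apply in_or_app; auto.
  - intros F HF x [A [FA Ax]].
    destruct (HF A FA x Ax) as [l [S1 [X1 Y1]]].
    exists l; repeat split; auto. intros y Hy; exists A; auto.
Qed.

Section TG.
Variables (T : Type) (mul : T -> T -> T) (inv : T -> T) (O : set (set T)).
Hypothesis HT : is_topological_group mul inv O.

Lemma tg_top : is_topology O.
Proof. destruct HT; auto. Qed.

Lemma mul_at W p q : O W -> W (mul p q) -> exists A B, O A /\ O B /\ A p /\ B q /\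
  forall p' q', A p' -> B q' -> W (mul p' q').
Proof.
  intros OW Wpq. destruct HT as [_ [Hm _]].
  destruct (Hm W OW (p, q) Wpq) as [A [B [OA [OB [Ap [Bq H]]]]]].
  exists A, B; repeat split; auto. intros p' q' a b; exact (H (p', q') a b).
Qed.

Lemma inv_at W p : O W -> W (inv p) -> exists A, O A /\ A p /\ forall p', A p' -> W (inv p').
Proof.
  intros OW Wp. destruct HT as [_ [_ Hi]].
  exists (fun x => W (inv x)); repeat split; auto.
Qed.

Lemma ltrans_open W c : O W -> O (fun y => W (mul c y)).
Proof.
  intro OW. apply top_local; [apply tg_top|]. intros y Wy.
  destruct (mul_at _ _ OW Wy) as [A [B [OA [OB [Ac [By H]]]]]].
  exists B; repeat split; auto.
Qed.

Lemma comm_at W p q : O W -> W (mul (mul p q) (mul (inv p) (inv q))) ->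
  exists A B, O A /\ O B /\ A p /\ B q /\
  forall p' q', A p' -> B q' -> W (mul (mul p' q') (mul (inv p') (inv q'))).
Proof.
  intros OW Wc. pose proof tg_top as Ht.
  destruct (mul_at _ _ OW Wc) as [A1 [A2 [O1 [O2 [H1 [H2 H12]]]]]].
  destruct (mul_at _ _ O1 H1) as [A3 [A4 [O3 [O4 [H3 [H4 H34]]]]]].
  destruct (mul_at _ _ O2 H2) as [A5 [A6 [O5 [O6 [H5 [H6 H56]]]]]].
  destruct (inv_at _ O5 H5) as [A7 [O7 [H7 H7']]].
  destruct (inv_at _ O6 H6) as [A8 [O8 [H8 H8']]].
  exists (fun x => A3 x /\ A7 x), (fun x => A4 x /\ A8 x).
  repeat split; try apply top_inter; auto.
  intros p' q' [] []; auto.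
Qed.

Lemma conj_at W v p : O W -> W (mul (mul p v) (inv p)) ->
  exists A, O A /\ A p /\ forall p', A p' -> W (mul (mul p' v) (inv p')).
Proof.
  intros OW Wc. pose proof tg_top as Ht.
  destruct (mul_at _ _ OW Wc) as [A1 [A2 [O1 [O2 [H1 [H2 H12]]]]]].
  destruct (mul_at _ _ O1 H1) as [A3 [A4 [O3 [O4 [H3 [H4 H34]]]]]].
  destruct (inv_at _ O2 H2) as [A7 [O7 [H7 H7']]].
  exists (fun x => A3 x /\ A7 x); repeat split; try apply top_inter; auto.
  intros p' []; auto.
Qed.
End TG.

Set Implicit Arguments.

Section Zorn.
Variable A : Type.
Definition sub (P Q : A -> Prop) := forall a, P a -> Q a.
Variable Good : (A -> Prop) -> Prop.
Variable P0 : A -> Prop.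
Hypothesis HP0 : Good P0.
Definition chain (S : (A -> Prop) -> Prop) := forall X Y, S X -> S Y -> sub X Y \/ sub Y X.
Definition Union (S : (A -> Prop) -> Prop) : A -> Prop := fun a => P0 a \/ exists X, S X /\ X a.
Hypothesis Hchain : forall S, chain S -> (forall X, S X -> Good X /\ sub P0 X) -> Good (Union S).

Lemma sub_eq (X Y : A -> Prop) : sub X Y -> sub Y X -> X = Y.
Proof.
  intros H1 H2; apply functional_extensionality; intro a;
  apply propositional_extensionality; split; auto.
Qed.

Lemma zorn : exists P, Good P /\ sub P0 P /\ forall Q, Good Q -> sub P Q -> sub Q P.
Proof.
  apply NNPP; intro Hno.
  assert (Hnext : forall P, Good P /\ sub P0 P -> exists Q, Good Q /\ sub P Q /\ ~ sub Q P).
  { intros P [GP HP]. apply NNPP; intro H. apply Hno. exists P. split; [|split]; auto.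
    intros Q GQ PQ. apply NNPP; intro nQP. apply H. exists Q; auto. }
  pose (next := fun P => match excluded_middle_informative (Good P /\ sub P0 P) with
     | left h => proj1_sig (constructive_indefinite_description _ (Hnext P h))
     | right _ => P end).
  assert (N1 : forall P, sub P (next P)).
  { intro P; unfold next; destruct (excluded_middle_informative _) as [h|h].
    - exact (proj1 (proj2 (proj2_sig (constructive_indefinite_description _ (Hnext P h))))).
    - intros a Ha; exact Ha. }
  assert (N2 : forall P, Good P -> sub P0 P -> Good (next P) /\ ~ sub (next P) P).
  { intros P G1 G2; unfold next; destruct (excluded_middle_informative _) as [h|h].
    - pose proof (proj2_sig (constructive_indefinite_description _ (Hnext P h))) as HH.
      simpl in HH; tauto.
    - exfalso; auto. }
  pose (Tw := fun C => forall F : (A -> Prop) -> Prop, F P0 -> (forall X, F X -> F (next X)) ->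
     (forall S, (forall X, S X -> F X) -> F (Union S)) -> F C).
  assert (T0 : Tw P0) by (intros F a b c; exact a).
  assert (Tn : forall X, Tw X -> Tw (next X)) by (intros X HX F a b c; apply b; apply HX; auto).
  assert (TU : forall S, (forall X, S X -> Tw X) -> Tw (Union S))
    by (intros S HS F a b c; apply c; intros X HX; apply HS; auto).
  assert (TP0 : forall X, Tw X -> sub P0 X).
  { intros X HX; apply HX.
    - intros a h; exact h.
    - intros Y HY a h; apply N1; auto.
    - intros S _ a h; left; exact h. }
  pose (extreme := fun C => forall X, Tw X -> sub X C -> ~ sub C X -> sub (next X) C).
  assert (L1 : forall C, Tw C -> extreme C -> forall X, Tw X -> sub X C \/ sub (next C) X).
  { intros C TC EC X TX.
    enough (H : Tw X /\ (sub X C \/ sub (next C) X)) by (destruct H; auto).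
    apply TX.
    - split; [auto|left; apply TP0; auto].
    - intros Y [TY [HY|HY]]; split; auto.
      + destruct (classic (sub C Y)) as [HCY|HCY].
        * right. rewrite (sub_eq HY HCY). intros a h; exact h.
        * left. apply EC; auto.
      + right. intros a h; apply N1; auto.
    - intros S HS; split. { apply TU; intros Y HY; apply HS; auto. }
      destruct (classic (exists Y, S Y /\ ~ sub Y C)) as [[Y [SY nY]]|H].
      + right. destruct (HS Y SY) as [_ [HY|HY]]; [contradiction|].
        intros a h; right; exists Y; auto.
      + left. intros a [h|[Y [SY Ya]]].
        * apply (TP0 C TC); auto.
        * apply NNPP; intro na. apply H; exists Y; split; [auto|intro s; apply na; auto]. }
  assert (L2 : forall C, Tw C -> extreme C).
  { intros C TC. enough (H : Tw C /\ extreme C) by (destruct H; auto).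
    apply TC.
    - split; auto. intros X TX _ nP; exfalso; apply nP; apply TP0; auto.
    - intros Y [TY EY]; split; auto. intros X TX HX nX.
      destruct (L1 Y TY EY X TX) as [H|H]; [|contradiction].
      destruct (classic (sub Y X)) as [HYX|HYX].
      + rewrite (sub_eq H HYX). intros a h; exact h.
      + intros a h; apply N1; apply (EY X TX H HYX); auto.
    - intros S HS. split. { apply TU; intros Y HY; apply HS; auto. }
      intros X TX HX nX.
      assert (HC : exists D, S D /\ ~ sub D X).
      { apply NNPP; intro H. apply nX. intros a [h|[Y [SY Ya]]].
        - apply (TP0 X TX); auto.
        - apply NNPP; intro na. apply H; exists Y; split; [auto|intro s; apply na; auto]. }
      destruct HC as [D [SD nD]]. destruct (HS D SD) as [TD ED].
      destruct (L1 D TD ED X TX) as [H|H].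
      2:{ exfalso; apply nD; intros a h; apply H; apply N1; auto. }
      destruct (classic (sub D X)) as [HDX|HDX].
      + assert (XD : X = D) by (apply sub_eq; auto). subst X.
        assert (Ha : exists a, Union S a /\ ~ D a).
        { apply NNPP; intro H'. apply nX; intros a h; apply NNPP; intro na; apply H'; eauto. }
        destruct Ha as [a [[h|[E [SE Ea]]] na]].
        * exfalso; apply na; apply (TP0 D TD); auto.
        * destruct (HS E SE) as [TE EE].
          destruct (L1 D TD ED E TE) as [H2|H2].
          -- exfalso; apply na; apply H2; auto.
          -- intros b hb; right; exists E; split; auto.
      + intros a h; right; exists D; split; [auto|apply (ED X TX H HDX); auto]. }
  assert (Ch : chain Tw).
  { intros X Y TX TY. destruct (L1 Y TY (L2 Y TY) X TX) as [H|H]; [left; auto|].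
    right; intros a h; apply H; apply N1; auto. }
  assert (GT : forall X, Tw X -> Good X /\ sub P0 X).
  { intros X TX. enough (H : Tw X /\ Good X /\ sub P0 X) by tauto.
    apply TX.
    - split; [auto|split; [auto|intros a h; exact h]].
    - intros Y [TY [GY PY]]; split; auto. split; [apply N2; auto|].
      intros a h; apply N1; auto.
    - intros S HS. split. { apply TU; intros Y HY; apply HS; auto. }
      split.
      + apply Hchain.
        * intros Y Z SY SZ; apply Ch; apply HS; auto.
        * intros Y SY; destruct (HS Y SY) as [_ [? ?]]; auto.
      + intros a h; left; exact h. }
  assert (TUw : Tw (Union Tw)) by (apply TU; auto).
  destruct (GT _ TUw) as [G1 G2].
  destruct (N2 _ G1 G2) as [_ H]. apply H.
  intros a h. right. exists (next (Union Tw)); split; auto.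
Qed.
End Zorn.

Set Implicit Arguments.

Section Comp.
Variables (X : Type) (tX : topology X).

Definition agree (h h' : Vs tX) (L : list (V tX)) :=
  forall B, In B L -> proj1_sig h B = proj1_sig h' B.

Definition Sat (cs : list (V tX * bool)) (h : Vs tX) :=
  forall c, In c cs -> proj1_sig h (fst c) = snd c.

Lemma nil_of_false A (cs : list A) : (forall c, In c cs -> False) -> cs = nil.
Proof. destruct cs as [|c cs]; auto. intro H; exfalso; apply (H c); left; auto. Qed.

Lemma Vs_compact (Cov : Vs tX -> list (V tX) -> Prop) :
  (forall h, exists L, Cov h L) ->
  exists l : list (Vs tX * list (V tX)), (forall p, In p l -> Cov (fst p) (snd p)) /\
    forall h', exists p, In p l /\ agree h' (fst p) (snd p).
Proof.
  intro HC.
  pose (Coverable := fun cs => exists l : list (Vs tX * list (V tX)),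
     (forall p, In p l -> Cov (fst p) (snd p)) /\
     forall h', Sat cs h' -> exists p, In p l /\ agree h' (fst p) (snd p)).
  enough (H : Coverable nil).
  { destruct H as [l [H1 H2]]; exists l; split; auto. intro h'; apply H2.
    intros c []. }
  apply NNPP; intro nC.
  assert (Cmono : forall cs cs', Coverable cs -> (forall h, Sat cs' h -> Sat cs h) -> Coverable cs').
  { intros cs cs' [l [H1 H2]] H; exists l; split; auto. }
  pose (Good := fun P : (V tX * bool) -> Prop => forall cs, (forall c, In c cs -> P c) -> ~ Coverable cs).
  destruct (@zorn _ Good (fun _ => False)) as [P [GP [_ MP]]].
  { intros cs Hcs. rewrite (nil_of_false cs Hcs). exact nC. }
  { intros S ChS HS cs Hcs.
    assert (Fin : forall cs, (forall c, In c cs -> exists Y, S Y /\ Y c) ->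
       (forall c, In c cs -> False) \/ exists Y, S Y /\ forall c, In c cs -> Y c).
    { induction cs0 as [|c cs0 IH]; intro H.
      - left; intros c [].
      - destruct (H c (or_introl eq_refl)) as [Y [SY Yc]].
        destruct IH as [IH|[Z [SZ HZ]]]. { intros d Hd; apply H; right; auto. }
        + right; exists Y; split; auto. intros d [<-|Hd]; auto. exfalso; eauto.
        + right. destruct (ChS Y Z SY SZ) as [YZ|ZY].
          * exists Z; split; auto. intros d [<-|Hd]; auto.
          * exists Y; split; auto. intros d [<-|Hd]; auto. }
    destruct (Fin cs) as [H|[Y [SY HY]]].
    - intros c Hc. destruct (Hcs c Hc) as [[]|H]; auto.
    - rewrite (nil_of_false cs H); exact nC.
    - destruct (HS Y SY) as [GY _]. apply GY; auto. }
  assert (Tot : forall B, P (B, false) \/ P (B, true)).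
  { intro B. apply NNPP; intro nT.
    assert (Ext : forall b, exists cs, (forall c, In c cs -> P c) /\
        forall h, Sat ((B, b) :: cs) h -> exists l : list (Vs tX * list (V tX)),
          (forall p, In p l -> Cov (fst p) (snd p)) /\ True).
    { intro b; exists nil; split; [intros c []|]. intros; exists nil; split; auto. intros p []. }
    clear Ext.
    assert (Ext : forall b, exists cs, (forall c, In c cs -> P c) /\ Coverable ((B, b) :: cs)).
    { intro b.
      assert (nG : ~ Good (fun c => P c \/ c = (B, b))).
      { intro G. apply nT. assert (Hs : sub (fun c => P c \/ c = (B, b)) P).
        { apply MP; auto. intros c h; left; auto. }
        destruct b; [right|left]; apply Hs; right; auto. }
      unfold Good in nG. apply not_all_ex_not in nG. destruct nG as [cs Hcs].
      apply imply_to_and in Hcs. destruct Hcs as [Hcs Cv]. apply NNPP in Cv.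
      assert (Strip : forall cs, (forall c, In c cs -> P c \/ c = (B, b)) ->
        exists cs', (forall c, In c cs' -> P c) /\
        forall h, Sat cs' h -> proj1_sig h B = b -> Sat cs h).
      { induction cs0 as [|c cs0 IH]; intro H.
        - exists nil; split; [intros c []|]. intros h _ _ c [].
        - destruct IH as [cs' [H1 H2]]. { intros d Hd; apply H; right; auto. }
          destruct (H c (or_introl eq_refl)) as [Pc|Ec].
          + exists (c :: cs'); split.
            * intros d [<-|Hd]; auto.
            * intros h Hs Hb d [<-|Hd].
              -- apply Hs; left; auto.
              -- apply (H2 h); auto. intros e He; apply Hs; right; auto.
          + exists cs'; split; auto. intros h Hs Hb d [<-|Hd].
            * subst c; simpl; auto.
            * apply (H2 h); auto. }
      destruct (Strip cs Hcs) as [cs' [H1 H2]].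
      exists cs'; split; auto. apply Cmono with cs; auto.
      intros h Hs. apply H2. { intros c Hc; apply Hs; right; auto. }
      apply (Hs (B, b)); left; auto. }
    destruct (Ext false) as [cs0 [P0 C0]]. destruct (Ext true) as [cs1 [P1 C1]].
    apply (GP (cs0 ++ cs1)).
    { intros c Hc; apply in_app_or in Hc; destruct Hc; auto. }
    destruct C0 as [l0 [L0 R0]]. destruct C1 as [l1 [L1 R1]].
    exists (l0 ++ l1); split.
    - intros p Hp; apply in_app_or in Hp; destruct Hp; auto.
    - intros h' Hs.
      assert (S0 : Sat cs0 h') by (intros c Hc; apply Hs; apply in_or_app; auto).
      assert (S1 : Sat cs1 h') by (intros c Hc; apply Hs; apply in_or_app; auto).
      destruct (proj1_sig h' B) eqn:E.
      + destruct (R1 h') as [p [Hp Ap]].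
        { intros c [<-|Hc]; auto. }
        exists p; split; auto. apply in_or_app; auto.
      + destruct (R0 h') as [p [Hp Ap]].
        { intros c [<-|Hc]; auto. }
        exists p; split; auto. apply in_or_app; auto. }
  assert (Fun : forall B, P (B, false) -> P (B, true) -> False).
  { intros B H0 H1. apply (GP ((B, false) :: (B, true) :: nil)).
    { intros c [<-|[<-|[]]]; auto. }
    exists nil; split; [intros p []|]. intros h' Hs.
    pose proof (Hs (B, false) (or_introl eq_refl)) as E0.
    pose proof (Hs (B, true) (or_intror (or_introl eq_refl))) as E1.
    simpl in E0, E1. rewrite E0 in E1; discriminate. }
  pose (h0f := fun B => if excluded_middle_informative (P (B, true)) then true else false).
  assert (HP : forall B, P (B, h0f B)).
  { intro B; unfold h0f; destruct (excluded_middle_informative _) as [h|h]; auto.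
    destruct (Tot B); tauto. }
  assert (Hom : forall A B, h0f (vadd A B) = xorb (h0f A) (h0f B)).
  { intros A B. apply NNPP; intro nE.
    apply (GP ((A, h0f A) :: (B, h0f B) :: (vadd A B, h0f (vadd A B)) :: nil)).
    { intros c [<-|[<-|[<-|[]]]]; auto. }
    exists nil; split; [intros p []|]. intros h' Hs.
    pose proof (Hs _ (or_introl eq_refl)) as E0.
    pose proof (Hs _ (or_intror (or_introl eq_refl))) as E1.
    pose proof (Hs _ (or_intror (or_intror (or_introl eq_refl)))) as E2.
    simpl in E0, E1, E2. rewrite (proj2_sig h') in E2. rewrite E0, E1 in E2.
    exfalso; apply nE; auto. }
  pose (h0 := exist (fun f : V tX -> bool => forall A B, f (vadd A B) = xorb (f A) (f B)) h0f Hom).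
  destruct (HC h0) as [L0 HL0].
  apply (GP (map (fun B => (B, h0f B)) L0)).
  { intros c Hc. apply in_map_iff in Hc. destruct Hc as [B [<- _]]; auto. }
  exists ((h0, L0) :: nil); split.
  - intros p [<-|[]]; auto.
  - intros h' Hs. exists (h0, L0); split; [left; auto|].
    intros B HB. simpl. apply (Hs (B, h0f B)). apply in_map_iff. exists B; auto.
Qed.
End Comp.

Set Implicit Arguments.
Arguments vact : simpl never.
Arguments vadd : simpl never.
Arguments vsact : simpl never.
Arguments vsadd : simpl never.


Section Alg.
Variables (X : Type) (tX : topology X).

Lemma homeo_eq (a b : homeo tX) : (forall x, hf a x = hf b x) -> (forall x, hg a x = hg b x) -> a = b.
Proof.
  destruct a as [fa ga a1 a2 a3 a4], b as [fb gb b1 b2 b3 b4]; simpl; intros H1 H2.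
  assert (fa = fb) by (apply functional_extensionality; auto). subst fb.
  assert (ga = gb) by (apply functional_extensionality; auto). subst gb.
  f_equal; apply proof_irrelevance.
Qed.

Lemma Gt_eq (G : hsubgroup tX) (a b : Gt G) : proj1_sig a = proj1_sig b -> a = b.
Proof.
  destruct a as [a Ha], b as [b Hb]; simpl; intro; subst b. f_equal; apply proof_irrelevance.
Qed.

Lemma vadd_val (A B : V tX) x : proj1_sig (vadd A B) x = xorb (proj1_sig A x) (proj1_sig B x).
Proof. reflexivity. Qed.
Lemma vact_val (g : homeo tX) (A : V tX) x : proj1_sig (vact g A) x = proj1_sig A (hg g x).
Proof. reflexivity. Qed.
Lemma vzero_val x : proj1_sig (vzero tX) x = false.
Proof. reflexivity. Qed.
Lemma vsadd_val (f h : Vs tX) A : proj1_sig (vsadd f h) A = xorb (proj1_sig f A) (proj1_sig h A).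
Proof. reflexivity. Qed.
Lemma vsact_val (g : homeo tX) (f : Vs tX) A : proj1_sig (vsact g f) A = proj1_sig f (vact (hinv g) A).
Proof. reflexivity. Qed.
Lemma vszero_val A : proj1_sig (vszero tX) A = false.
Proof. reflexivity. Qed.
Lemma vs_add (f : Vs tX) A B : proj1_sig f (vadd A B) = xorb (proj1_sig f A) (proj1_sig f B).
Proof. apply (proj2_sig f). Qed.
Lemma vs_zero (f : Vs tX) : proj1_sig f (vzero tX) = false.
Proof.
  pose proof (vs_add f (vzero tX) (vzero tX)) as H.
  replace (vadd (vzero tX) (vzero tX)) with (vzero tX) in H by (apply V_eq; reflexivity).
  destruct (proj1_sig f (vzero tX)); simpl in H; auto.
Qed.

Lemma vact_comp a b (A : V tX) : vact (hcomp a b) A = vact a (vact b A).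
Proof. apply V_eq; intro x; reflexivity. Qed.
Lemma vact_inv_l (g : homeo tX) A : vact (hinv g) (vact g A) = A.
Proof. apply V_eq; intro x; rewrite !vact_val; simpl; rewrite hgf; auto. Qed.
Lemma vact_inv_r (g : homeo tX) A : vact g (vact (hinv g) A) = A.
Proof. apply V_eq; intro x; rewrite !vact_val; simpl; rewrite hfg; auto. Qed.
Lemma vact_id (A : V tX) : vact (hid tX) A = A.
Proof. apply V_eq; intro x; reflexivity. Qed.
Lemma vact_hinv_hid (A : V tX) : vact (hinv (hid tX)) A = A.
Proof. apply V_eq; intro x; reflexivity. Qed.
Lemma vact_zero (g : homeo tX) : vact g (vzero tX) = vzero tX.
Proof. apply V_eq; intro x; reflexivity. Qed.
Lemma vact_hinv2 (g : homeo tX) A : vact (hinv (hinv g)) A = vact g A.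
Proof. apply V_eq; intro x; reflexivity. Qed.
Lemma vadd_0l (A : V tX) : vadd (vzero tX) A = A.
Proof. apply V_eq; intro x; reflexivity. Qed.
Lemma vadd_0r (A : V tX) : vadd A (vzero tX) = A.
Proof. apply V_eq; intro x; rewrite vadd_val; simpl; destruct (proj1_sig A x); auto. Qed.
Lemma vadd_self (A : V tX) : vadd A A = vzero tX.
Proof. apply V_eq; intro x; rewrite vadd_val; simpl; destruct (proj1_sig A x); auto. Qed.
Lemma vadd_assoc (A B C : V tX) : vadd A (vadd B C) = vadd (vadd A B) C.
Proof. apply V_eq; intro x; rewrite !vadd_val; btauto. Qed.
Lemma vadd_comm (A B : V tX) : vadd A B = vadd B A.
Proof. apply V_eq; intro x; rewrite !vadd_val; btauto. Qed.

Section M.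
Variable G : hsubgroup tX.
Definition ma (p : Mt G) : bool := fst (fst (fst p)).
Definition mx (p : Mt G) : V tX := snd (fst (fst p)).
Definition mf (p : Mt G) : Vs tX := snd (fst p).
Definition mg (p : Mt G) : Gt G := snd p.
Definition mh (p : Mt G) : homeo tX := proj1_sig (snd p).

Lemma Mt_eq (p q : Mt G) : ma p = ma q -> mx p = mx q -> mf p = mf q -> mg p = mg q -> p = q.
Proof.
  destruct p as [[[a x] f] g], q as [[[a' x'] f'] g']; unfold ma, mx, mf, mg; simpl.
  intros; subst; auto.
Qed.

Lemma ma_mul p q : ma (Mmul p q) = xorb (xorb (ma p) (ma q)) (proj1_sig (mf p) (vact (mh p) (mx q))).
Proof. destruct p as [[[a x] f] g], q as [[[a' x'] f'] g']; reflexivity. Qed.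
Lemma mx_mul p q : mx (Mmul p q) = vadd (mx p) (vact (mh p) (mx q)).
Proof. destruct p as [[[a x] f] g], q as [[[a' x'] f'] g']; reflexivity. Qed.
Lemma mf_mul p q : mf (Mmul p q) = vsadd (mf p) (vsact (mh p) (mf q)).
Proof. destruct p as [[[a x] f] g], q as [[[a' x'] f'] g']; reflexivity. Qed.
Lemma mg_mul p q : mg (Mmul p q) = Gmul (mg p) (mg q).
Proof. destruct p as [[[a x] f] g], q as [[[a' x'] f'] g']; reflexivity. Qed.
Lemma mh_mul p q : mh (Mmul p q) = hcomp (mh p) (mh q).
Proof. destruct p as [[[a x] f] g], q as [[[a' x'] f'] g']; reflexivity. Qed.
Lemma ma_inv p : ma (Minv p) = xorb (ma p) (proj1_sig (mf p) (mx p)).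
Proof. destruct p as [[[a x] f] g]; reflexivity. Qed.
Lemma mx_inv p : mx (Minv p) = vact (hinv (mh p)) (mx p).
Proof. destruct p as [[[a x] f] g]; reflexivity. Qed.
Lemma mf_inv p : mf (Minv p) = vsact (hinv (mh p)) (mf p).
Proof. destruct p as [[[a x] f] g]; reflexivity. Qed.
Lemma mg_inv p : mg (Minv p) = Ginv (mg p).
Proof. destruct p as [[[a x] f] g]; reflexivity. Qed.
Lemma mh_inv p : mh (Minv p) = hinv (mh p).
Proof. destruct p as [[[a x] f] g]; reflexivity. Qed.
Lemma ma_one : ma (Mone G) = false. Proof. reflexivity. Qed.
Lemma mx_one : mx (Mone G) = vzero tX. Proof. reflexivity. Qed.
Lemma mf_one : mf (Mone G) = vszero tX. Proof. reflexivity. Qed.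
Lemma mg_one : mg (Mone G) = Gone G. Proof. reflexivity. Qed.
Lemma mh_one : mh (Mone G) = hid tX. Proof. reflexivity. Qed.
Lemma mh_mg p : proj1_sig (mg p) = mh p. Proof. reflexivity. Qed.

Lemma Gmul_inv_l (g : Gt G) : Gmul (Ginv g) g = Gone G.
Proof. apply Gt_eq; apply homeo_eq; intro x; simpl; rewrite ?hfg, ?hgf; auto. Qed.
Lemma Gmul_inv_r (g : Gt G) : Gmul g (Ginv g) = Gone G.
Proof. apply Gt_eq; apply homeo_eq; intro x; simpl; rewrite ?hfg, ?hgf; auto. Qed.
Lemma Gmul_1l (g : Gt G) : Gmul (Gone G) g = g.
Proof. apply Gt_eq; apply homeo_eq; intro x; reflexivity. Qed.
Lemma Gmul_1r (g : Gt G) : Gmul g (Gone G) = g.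
Proof. apply Gt_eq; apply homeo_eq; intro x; reflexivity. Qed.
Lemma Gmul_assoc (a b c : Gt G) : Gmul a (Gmul b c) = Gmul (Gmul a b) c.
Proof. apply Gt_eq; apply homeo_eq; intro x; reflexivity. Qed.
Lemma Ginv_one : Ginv (Gone G) = Gone G.
Proof. apply Gt_eq; apply homeo_eq; intro x; reflexivity. Qed.

Ltac vs_ext := apply Vs_eq; intro; rewrite ?vsadd_val, ?vsact_val, ?vszero_val.

Lemma Mmul_1l p : Mmul (Mone G) p = p.
Proof.
  apply Mt_eq.
  - rewrite ma_mul, ma_one, mf_one, vszero_val; destruct (ma p); auto.
  - rewrite mx_mul, mx_one, mh_one, vadd_0l, vact_id; auto.
  - rewrite mf_mul, mf_one, mh_one. vs_ext. rewrite vact_hinv_hid; auto.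
  - rewrite mg_mul, mg_one, Gmul_1l; auto.
Qed.

Lemma Mmul_1r p : Mmul p (Mone G) = p.
Proof.
  apply Mt_eq.
  - rewrite ma_mul, ma_one, mx_one, vact_zero, vs_zero; destruct (ma p); auto.
  - rewrite mx_mul, mx_one, vact_zero, vadd_0r; auto.
  - rewrite mf_mul, mf_one. vs_ext. destruct (proj1_sig (mf p) _); auto.
  - rewrite mg_mul, mg_one, Gmul_1r; auto.
Qed.

Lemma Mmul_Vl p : Mmul (Minv p) p = Mone G.
Proof.
  apply Mt_eq.
  - rewrite ma_mul, ma_inv, mf_inv, mh_inv, vsact_val, vact_hinv2, vact_inv_r, ma_one; btauto.
  - rewrite mx_mul, mx_inv, mh_inv, vadd_self; auto.
  - rewrite mf_mul, mf_inv, mh_inv. vs_ext. rewrite vact_hinv2. btauto.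
  - rewrite mg_mul, mg_inv, Gmul_inv_l; auto.
Qed.

Lemma Mmul_Vr p : Mmul p (Minv p) = Mone G.
Proof.
  apply Mt_eq.
  - rewrite ma_mul, ma_inv, mx_inv, vact_inv_r, ma_one; btauto.
  - rewrite mx_mul, mx_inv, vact_inv_r, vadd_self; auto.
  - rewrite mf_mul, mf_inv. vs_ext. rewrite vact_hinv2, vact_inv_r. btauto.
  - rewrite mg_mul, mg_inv, Gmul_inv_r; auto.
Qed.

Lemma Mmul_assoc (p q r : Mt G) : Mmul p (Mmul q r) = Mmul (Mmul p q) r.
Proof.
  apply Mt_eq.
  - rewrite !ma_mul, !mx_mul, !mf_mul, !mh_mul, vsadd_val, vsact_val, vact_comp,
      vact_inv_l, (vact_add (mh p)), vs_add. btauto.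
  - rewrite !mx_mul, !mh_mul, vact_comp, (vact_add (mh p)), vadd_assoc; auto.
  - rewrite !mf_mul, !mh_mul. apply Vs_eq; intro x; rewrite !vsadd_val, !vsact_val, !vsadd_val, !vsact_val.
    replace (vact (hinv (hcomp (mh p) (mh q))) x) with (vact (hinv (mh q)) (vact (hinv (mh p)) x))
      by (apply V_eq; intro; reflexivity). btauto.
  - rewrite !mg_mul, Gmul_assoc; auto.
Qed.

Lemma Minv_one : Minv (Mone G) = Mone G.
Proof. rewrite <- (Mmul_1r (Minv (Mone G))). apply Mmul_Vl. Qed.

Lemma Mmul_cancel (p y : Mt G) : Mmul p (Mmul (Minv p) y) = y.
Proof. rewrite Mmul_assoc, Mmul_Vr, Mmul_1l; auto. Qed.
Lemma Mmul_cancel' (p y : Mt G) : Mmul (Minv p) (Mmul p y) = y.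
Proof. rewrite Mmul_assoc, Mmul_Vl, Mmul_1l; auto. Qed.
End M.
End Alg.

Unset Implicit Arguments.


Section Top.
Variables (X : Type) (tX : topology X).
Hypothesis Hst : stone_space (open tX).

Lemma tX_top : is_topology (open tX).
Proof. apply open_is_topology. Qed.

Lemma binop_cont (op : bool -> bool -> bool) (a b : X -> bool) :
  continuous tX (@discrete_top bool) a -> continuous tX (@discrete_top bool) b ->
  continuous tX (@discrete_top bool) (fun x => op (a x) (b x)).
Proof.
  intros Ha Hb U _.
  destruct (open_is_topology tX) as [_ [Hi Hu]].
  apply open_ext with (A := fun x => exists S,
     (exists u v, U (op u v) /\ S = (fun y => a y = u /\ b y = v)) /\ S x).
  - intro x; split.
    + intros [S [[u [v [HU ->]]] [Hx Hy]]]; rewrite Hx, Hy; exact HU.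
    + intro HU. exists (fun y => a y = a x /\ b y = b x); split; [|split; reflexivity].
      exists (a x), (b x); split; [exact HU | reflexivity].
  - apply Hu. intros S [u [v [_ ->]]]. apply Hi.
    + apply (Ha (fun w => w = u)); exact I.
    + apply (Hb (fun w => w = v)); exact I.
Qed.

Definition vor (A B : V tX) : V tX :=
  exist _ (fun x => orb (proj1_sig A x) (proj1_sig B x))
    (binop_cont orb _ _ (proj2_sig A) (proj2_sig B)).

Lemma V_open (A : V tX) b : open tX (fun x => proj1_sig A x = b).
Proof. apply (proj2_sig A (fun w => w = b)); exact I. Qed.

Lemma empty_open : open tX (fun _ => False).
Proof.
  apply open_ext with (A := fun x => exists S : set X, False /\ S x).
  - intro x; split; [intros [S [[] _]] | intros []].
  - apply top_union; [apply tX_top|]. intros A [].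
Qed.

Lemma clopen_V (C : set X) : clopen (open tX) C -> exists c : V tX, forall x, proj1_sig c x = true <-> C x.
Proof.
  intros [HC HnC].
  pose (cf := fun x => if excluded_middle_informative (C x) then true else false).
  assert (Hc : continuous tX (@discrete_top bool) cf).
  { intros U _. destruct (classic (U true)) as [Ht|Ht]; destruct (classic (U false)) as [Hf|Hf].
    - apply open_ext with (A := fun _ => True); [|apply top_full, tX_top].
      intro x; unfold cf; destruct (excluded_middle_informative (C x)); tauto.
    - apply open_ext with (A := C); [|auto].
      intro x; unfold cf; destruct (excluded_middle_informative (C x)); tauto.
    - apply open_ext with (A := fun x => ~ C x); [|auto].
      intro x; unfold cf; destruct (excluded_middle_informative (C x)); tauto.
    - apply open_ext with (A := fun _ => False); [|apply empty_open].
      intro x; unfold cf; destruct (excluded_middle_informative (C x)); tauto. }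
  exists (exist _ cf Hc); intro x; simpl; unfold cf.
  destruct (excluded_middle_informative (C x)); split; auto; discriminate.
Qed.

Lemma closed_compact (K : set X) : open tX (fun x => ~ K x) -> compact_set tX K.
Proof.
  intros HK F HF Hcov.
  destruct Hst as [Hc _].
  destruct (Hc (fun A => F A \/ A = (fun x => ~ K x))) as [l [Hl1 Hl2]].
  - intros A [FA| ->]; auto.
  - intros x _. destruct (classic (K x)) as [Kx|nK].
    + destruct (Hcov x Kx) as [A [FA Ax]]; exists A; auto.
    + exists (fun x => ~ K x); auto.
  - assert (Strip : forall l', (forall A, In A l' -> F A \/ A = (fun x => ~ K x)) ->
      exists l, (forall A, In A l -> F A) /\ forall x A, In A l' -> A x -> K x -> exists B, In B l /\ B x).
    { induction l' as [|A l' IH]; intro H.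
      - exists nil; split; [intros A []|]. intros x A [].
      - destruct IH as [l0 [H1 H2]]. { intros B HB; apply H; right; auto. }
        destruct (H A (or_introl eq_refl)) as [FA|EA].
        + exists (A :: l0); split.
          * intros B [<-|HB]; auto.
          * intros x B [<-|HB] Bx Kx; [exists A; split; [left|]; auto|].
            destruct (H2 x B HB Bx Kx) as [B' [? ?]]; exists B'; split; [right|]; auto.
        + exists l0; split; auto. intros x B [<-|HB] Bx Kx.
          * subst A; contradiction.
          * eauto. }
    destruct (Strip l Hl1) as [l0 [H1 H2]]. exists l0; split; auto.
    intros x Kx. destruct (Hl2 x I) as [A [HA Ax]]. eauto.
Qed.

Lemma single_compact (x0 : X) : compact_set tX (fun y => y = x0).
Proof.
  intros F HF Hcov. destruct (Hcov x0 eq_refl) as [A [FA Ax]].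
  exists (A :: nil); split.
  - intros B [<-|[]]; auto.
  - intros x ->; exists A; split; [left|]; auto.
Qed.

Lemma clopen_sep (K U : set X) : compact_set tX K -> open tX U -> (forall x, K x -> U x) ->
  exists c : V tX, (forall x, K x -> proj1_sig c x = true) /\ (forall x, proj1_sig c x = true -> U x).
Proof.
  intros HK HU KU. destruct Hst as [_ [_ Hz]].
  destruct (HK (fun A => exists c : V tX, (forall y, proj1_sig c y = true -> U y) /\
                          A = (fun y => proj1_sig c y = true))) as [l [Hl1 Hl2]].
  - intros A [c [_ ->]]; apply V_open.
  - intros x Kx. destruct (Hz U x HU (KU x Kx)) as [C [HC [Cx CU]]].
    destruct (clopen_V _ HC) as [c Hc].
    exists (fun y => proj1_sig c y = true); split; [|apply Hc; auto].
    exists c; split; auto. intros y Hy; apply CU; apply Hc; auto.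
  - assert (Un : forall l, (forall A, In A l -> exists c : V tX, (forall y, proj1_sig c y = true -> U y) /\
                          A = (fun y => proj1_sig c y = true)) ->
       exists c : V tX, (forall y, proj1_sig c y = true -> U y) /\
         forall y A, In A l -> A y -> proj1_sig c y = true).
    { induction l0 as [|A l0 IH]; intro H.
      - exists (vzero tX); split; [intros y Hy; discriminate|]. intros y A [].
      - destruct IH as [c [H1 H2]]. { intros B HB; apply H; right; auto. }
        destruct (H A (or_introl eq_refl)) as [c' [H1' ->]].
        exists (vor c' c); split.
        + intros y; simpl. destruct (proj1_sig c' y) eqn:E; simpl; auto.
        + intros y B [<-|HB] By; simpl.
          * rewrite By; auto.
          * rewrite (H2 y B HB By); apply orb_true_r. }
    destruct (Un l Hl1) as [c [H1 H2]]. exists c; split; auto.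
    intros x Kx. destruct (Hl2 x Kx) as [A [HA Ax]]. eauto.
Qed.

Variable G : hsubgroup tX.

Lemma GTK (K U : set X) : compact_set tX K -> open tX U ->
  G_top (fun g : Gt G => forall x, K x -> U (hf (proj1_sig g) x)).
Proof.
  intros HK HU. exists (fun h => forall x, K x -> U (hf h x)); split; [|intro; tauto].
  intros h Hh. exists ((fun h => forall x, K x -> U (hf h x)) :: nil). split; [|split].
  - intros B [<-|[]]. exists K, U; repeat split; auto.
  - intros B [<-|[]]; auto.
  - intros y Hy; apply (Hy _ (or_introl eq_refl)).
Qed.

Hypothesis HGt : is_topological_group (@Gmul X tX G) (@Ginv X tX G) (@G_top X tX G).

Lemma G_top_is : is_topology (@G_top X tX G).
Proof. destruct HGt; auto. Qed.

Lemma G_agree (C D : V tX) :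
  G_top (fun g : Gt G => forall x, proj1_sig D (hf (proj1_sig g) x) = proj1_sig C x).
Proof.
  apply open_ext with (A := fun g : Gt G =>
    (forall x, proj1_sig C x = true -> proj1_sig D (hf (proj1_sig g) x) = true) /\
    (forall x, proj1_sig C x = false -> proj1_sig D (hf (proj1_sig g) x) = false)).
  - intro g; split.
    + intros [H1 H2] x. destruct (proj1_sig C x) eqn:E; auto.
    + intros H; split; intros x Hx; rewrite H; auto.
  - assert (K1 : compact_set tX (fun x => proj1_sig C x = true)).
    { apply closed_compact.
      apply open_ext with (A := fun x => proj1_sig C x = false); [|apply V_open].
      intro x; destruct (proj1_sig C x); split; intro H; try discriminate;
        try (exfalso; apply H; reflexivity); try reflexivity; try (intro; discriminate). }
    assert (K2 : compact_set tX (fun x => proj1_sig C x = false)).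
    { apply closed_compact.
      apply open_ext with (A := fun x => proj1_sig C x = true); [|apply V_open].
      intro x; destruct (proj1_sig C x); split; intro H; try discriminate;
        try (exfalso; apply H; reflexivity); try reflexivity; try (intro; discriminate). }
    apply top_inter; [apply G_top_is| |].
    + exact (GTK _ (fun z => proj1_sig D z = true) K1 (V_open D true)).
    + exact (GTK _ (fun z => proj1_sig D z = false) K2 (V_open D false)).
Qed.

Definition stab (C : V tX) (g : Gt G) := forall x, proj1_sig C (hf (proj1_sig g) x) = proj1_sig C x.

Lemma G_nbhd (N : set (Gt G)) : G_top N -> N (Gone G) ->
  exists Cs : list (V tX), forall g, (forall C, In C Cs -> stab C g) -> N g.
Proof.
  intros [W' [HW' HN]] N1. apply HN in N1. simpl in N1.
  destruct (HW' _ N1) as [l [Hl1 [Hl2 Hl3]]].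
  assert (Hb : forall l, (forall B, In B l -> (exists K U, compact_set tX K /\ open tX U /\
       forall h, B h <-> (forall x, K x -> U (hf h x)))) -> (forall B, In B l -> B (hid tX)) ->
     exists Cs : list (V tX), forall g : Gt G, (forall C, In C Cs -> stab C g) ->
       forall B, In B l -> B (proj1_sig g)).
  { induction l0 as [|B l0 IH]; intros H1 H2.
    - exists nil; intros g _ B [].
    - destruct IH as [Cs HCs]. { intros; apply H1; right; auto. } { intros; apply H2; right; auto. }
      destruct (H1 B (or_introl eq_refl)) as [K [U [HK [HU HB]]]].
      pose proof (H2 B (or_introl eq_refl)) as Bid. rewrite HB in Bid. simpl in Bid.
      destruct (clopen_sep K U HK HU Bid) as [c [c1 c2]].
      exists (c :: Cs); intros g Hg B' [<-|HB'].
      + apply HB. intros x Kx. apply c2. rewrite (Hg c (or_introl eq_refl)); auto.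
      + apply (HCs g); auto. intros; apply Hg; right; auto. }
  destruct (Hb l Hl1 Hl2) as [Cs HCs]. exists Cs; intros g Hg.
  apply HN. apply Hl3. apply HCs; auto.
Qed.

Lemma G_haus : hausdorff (@G_top X tX G).
Proof.
  intros g1 g2 Hne.
  assert (Hx : exists x, hf (proj1_sig g1) x <> hf (proj1_sig g2) x).
  { apply NNPP; intro H. apply Hne. apply Gt_eq. apply homeo_eq.
    - intro x; apply NNPP; intro H'; apply H; eauto.
    - intro y. set (a := proj1_sig g1) in *; set (b := proj1_sig g2) in *.
      assert (E : hf a (hg a y) = hf a (hg b y)).
      { rewrite hfg. apply NNPP; intro H'. apply H. exists (hg b y).
        rewrite hfg; auto. }
      rewrite <- (hgf a (hg a y)), E, hgf; auto. }
  destruct Hx as [x Hx]. destruct Hst as [_ [Hh Hz]].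
  destruct (Hh _ _ Hx) as [U [W [HU [HW [Ux [Wy Hd]]]]]].
  destruct (Hz U _ HU Ux) as [C [HC [Cx CU]]].
  destruct (clopen_V _ HC) as [c Hc].
  exists (fun g : Gt G => forall y, y = x -> (fun z => proj1_sig c z = true) (hf (proj1_sig g) y)),
         (fun g : Gt G => forall y, y = x -> (fun z => proj1_sig c z = false) (hf (proj1_sig g) y)).
  split; [exact (GTK _ (fun z => proj1_sig c z = true) (single_compact x) (V_open c true))|].
  split; [exact (GTK _ (fun z => proj1_sig c z = false) (single_compact x) (V_open c false))|].
  split; [intros y ->; apply Hc; auto|].
  split; [intros y ->; destruct (proj1_sig c (hf (proj1_sig g2) x)) eqn:E; auto;
          exfalso; apply (Hd (hf (proj1_sig g2) x)); auto; apply CU; apply Hc; auto|].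
  intros g H1 H2. pose proof (H1 x eq_refl) as E1; pose proof (H2 x eq_refl) as E2.
  simpl in E1, E2; rewrite E1 in E2; discriminate.
Qed.
End Top.

Unset Implicit Arguments.


Section Tau.
Variables (X : Type) (tX : topology X) (G : hsubgroup tX).

Definition Nb (p : Mt G) (L : list (V tX)) (N : set (Gt G)) : set (Mt G) :=
  fun q => ma q = ma p /\ mx q = mx p /\
    (forall B, In B L -> proj1_sig (mf q) B = proj1_sig (mf p) B) /\ N (mg q).

Lemma Vs_basic (f0 : Vs tX) (l : list (set (Vs tX))) :
  (forall S, In S l -> exists A b, forall f, S f <-> proj1_sig f A = b) ->
  (forall S, In S l -> S f0) ->
  exists L : list (V tX), forall f : Vs tX, (forall B, In B L -> proj1_sig f B = proj1_sig f0 B) ->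
    forall S, In S l -> S f.
Proof.
  induction l as [|S l IH]; intros H1 H2.
  - exists nil; intros f _ S [].
  - destruct IH as [L HL]. { intros; apply H1; right; auto. } { intros; apply H2; right; auto. }
    destruct (H1 S (or_introl eq_refl)) as [A [b HS]].
    exists (A :: L); intros f Hf S' [<-|HS'].
    + apply HS. rewrite (Hf A (or_introl eq_refl)). apply HS. apply H2; left; auto.
    + apply HL; auto. intros; apply Hf; right; auto.
Qed.

Lemma disc2_open (T1 T2 : Type) (W : set (T1 * T2)) : prod_top (@discrete_top T1) (@discrete_top T2) W.
Proof.
  intros p Wp. exists (fun a => a = fst p), (fun b => b = snd p).
  split; [exact I|split; [exact I|split; [auto|split; [auto|]]]].
  intros q H1 H2. destruct p, q; simpl in *; subst; auto.
Qed.

Lemma tau_nb (U : set (Mt G)) (p : Mt G) : M_top U -> U p ->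
  exists L N, G_top N /\ N (mg p) /\ forall q, Nb p L N q -> U q.
Proof.
  intros HU Up. destruct (HU p Up) as [A [B [HA [HB [Ap [Bp HAB]]]]]].
  destruct (HA _ Ap) as [A1 [A2 [HA1 [HA2 [A1p [A2p HA12]]]]]].
  destruct (HA2 _ A2p) as [l [Hl1 [Hl2 Hl3]]].
  destruct (Vs_basic _ l Hl1 Hl2) as [L HL].
  exists L, B; split; [auto|split; [auto|]].
  intros q [E1 [E2 [E3 E4]]]. apply HAB; auto. apply HA12.
  - replace (fst (fst (fst q))) with (fst (fst (fst p))); auto.
    destruct q as [[[a x] f] g], p as [[[a' x'] f'] g']; unfold ma, mx in *; simpl in *; subst; auto.
  - apply Hl3. apply HL; auto.
Qed.

Lemma Nb_open (p : Mt G) L N : G_top N -> M_top (Nb p L N).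
Proof.
  intros HN q [E1 [E2 [E3 E4]]].
  exists (fun r : HX tX => fst r = fst (fst p) /\ forall B, In B L -> proj1_sig (snd r) B = proj1_sig (mf p) B),
         N.
  split; [|split; [auto|split; [|split; [auto|]]]].
  - intros r [R1 R2].
    exists (fun s => s = fst r), (fun f : Vs tX => forall B, In B L -> proj1_sig f B = proj1_sig (mf p) B).
    split; [apply disc2_open|split; [|split; [auto|split; [auto|]]]].
    + intros f Hf. exists (map (fun B => fun f : Vs tX => proj1_sig f B = proj1_sig (mf p) B) L).
      split; [|split].
      * intros S HS; apply in_map_iff in HS; destruct HS as [B [<- _]].
        exists B, (proj1_sig (mf p) B); intro; tauto.
      * intros S HS; apply in_map_iff in HS; destruct HS as [B [<- HB]]; auto.
      * intros f' Hf' B HB. apply (Hf' (fun f : Vs tX => proj1_sig f B = proj1_sig (mf p) B)).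
        apply in_map_iff; exists B; auto.
    + intros s Hs1 Hs2; split; auto. rewrite Hs1; auto.
  - split; auto. destruct q as [[[a x] f] g], p as [[[a' x'] f'] g']; unfold ma, mx in *; simpl in *; subst; auto.
  - intros r [R1 R2] Nr. destruct r as [[[a x] f] g], p as [[[a' x'] f'] g'].
    simpl in *. unfold Nb, ma, mx, mf, mg; simpl. injection R1; intros; subst; auto.
Qed.

Lemma Nb_self (p : Mt G) L (N : set (Gt G)) : N (mg p) -> Nb p L N p.
Proof. intro H; unfold Nb; auto. Qed.

Hypothesis Hst : stone_space (open tX).
Hypothesis HGt : is_topological_group (@Gmul X tX G) (@Ginv X tX G) (@G_top X tX G).

Lemma Vs_top_is : is_topology (@Vs_top X tX).
Proof. apply gen_top_is. Qed.

Lemma M_top_is : is_topology (@M_top X tX G).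
Proof.
  apply prod_top_is; [|apply G_top_is; auto].
  apply prod_top_is; [|apply Vs_top_is]. apply prod_top_is; apply discrete_is.
Qed.

Lemma G_list_open (L : list (V tX)) (P : V tX -> set (Gt G)) :
  (forall B, G_top (P B)) -> G_top (fun g => forall B, In B L -> P B g).
Proof.
  intro H. induction L as [|B L IH].
  - apply open_ext with (A := fun _ => True); [|apply top_full, G_top_is; auto].
    intro; split; auto. intros _ B [].
  - apply open_ext with (A := fun g => P B g /\ forall B', In B' L -> P B' g).
    + intro g; split. { intros [H1 H2] B' [<-|HB]; auto. }
      intro H'; split; auto. apply H'; left; auto. intros; apply H'; right; auto.
    + apply top_inter; auto. apply G_top_is; auto.
Qed.

End Tau.

Unset Implicit Arguments.


Section Tau2.
Variables (X : Type) (tX : topology X) (G : hsubgroup tX).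
Hypothesis Hst : stone_space (open tX).
Hypothesis HGt : is_topological_group (@Gmul X tX G) (@Ginv X tX G) (@G_top X tX G).

Lemma agree_vact (h : homeo tX) (C D : V tX) : (forall x, proj1_sig D (hf h x) = proj1_sig C x) -> vact h C = D.
Proof. intro H; apply V_eq; intro x; rewrite vact_val, <- H, hfg; auto. Qed.

Lemma agree_vinv (h h0 : homeo tX) (B : V tX) :
  (forall x, proj1_sig B (hf h x) = proj1_sig (vact (hinv h0) B) x) -> vact (hinv h) B = vact (hinv h0) B.
Proof. intro H; apply V_eq; intro x; rewrite vact_val; simpl; rewrite H; auto. Qed.

Lemma Gtrue : G_top (fun _ : Gt G => True).
Proof. apply top_full, G_top_is; auto. Qed.

Lemma Mmul_cont : continuous (prod_top (@M_top X tX G) (@M_top X tX G)) (@M_top X tX G)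
  (fun p => Mmul (fst p) (snd p)).
Proof.
  intros U HU [p q] Upq. simpl in Upq.
  destruct (tau_nb _ _ _ _ _ HU Upq) as [L [N [HN [Nr Hsub]]]].
  rewrite mg_mul in Nr.
  destruct (mul_at HGt _ _ _ HN Nr) as [N1 [N2 [HN1 [HN2 [N1p [N2q HN12]]]]]].
  pose (Ag1 := fun g : Gt G => forall x, proj1_sig (vact (mh p) (mx q)) (hf (proj1_sig g) x) = proj1_sig (mx q) x).
  pose (AgL := fun g : Gt G => forall B, In B L -> forall x, proj1_sig B (hf (proj1_sig g) x) = proj1_sig (vact (hinv (mh p)) B) x).
  exists (Nb X tX G p (vact (mh p) (mx q) :: L) (fun g => N1 g /\ Ag1 g /\ AgL g)),
         (Nb X tX G q (map (vact (hinv (mh p))) L) N2).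
  split; [apply Nb_open; apply top_inter; [apply G_top_is; auto|auto|apply top_inter; [apply G_top_is; auto| |]]|].
  { apply G_agree; auto. }
  { apply (G_list_open _ _ _ HGt L (fun B g => forall x, proj1_sig B (hf (proj1_sig g) x) = proj1_sig (vact (hinv (mh p)) B) x)).
    intro B; apply G_agree; auto. }
  split; [apply Nb_open; auto|].
  split. { apply Nb_self. split; [auto|split].
    - intro x; rewrite vact_val; unfold mh; rewrite hgf; auto.
    - intros B _ x; reflexivity. }
  split. { apply Nb_self; auto. }
  intros [p' q'] [E1 [E2 [E3 [E4 [E5 E6]]]]] [F1 [F2 [F3 F4]]]. simpl in *.
  apply Hsub.
  assert (V1 : vact (mh p') (mx q') = vact (mh p) (mx q)) by (rewrite F2; apply agree_vact; apply E5).
  assert (V2 : forall B, In B L -> vact (hinv (mh p')) B = vact (hinv (mh p)) B)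
    by (intros B HB; apply agree_vinv; apply E6; auto).
  split; [|split; [|split]].
  - rewrite !ma_mul, E1, F1, V1, (E3 _ (or_introl eq_refl)); auto.
  - rewrite !mx_mul, E2, V1; auto.
  - intros B HB. rewrite !mf_mul, !vsadd_val, !vsact_val, E3 by (right; auto).
    rewrite V2 by auto. rewrite F3; auto. apply in_map; auto.
  - rewrite mg_mul; auto.
Qed.

Lemma Minv_cont : continuous (@M_top X tX G) (@M_top X tX G) (@Minv X tX G).
Proof.
  intros U HU. apply top_local; [apply M_top_is; auto|]. intros p Up.
  destruct (tau_nb _ _ _ _ _ HU Up) as [L [N [HN [Nr Hsub]]]].
  rewrite mg_inv in Nr.
  assert (HN1 : G_top (fun g => N (Ginv g))) by (destruct HGt as [_ [_ Hi]]; apply Hi; auto).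
  pose (Agx := fun g : Gt G => forall x, proj1_sig (mx p) (hf (proj1_sig g) x) = proj1_sig (vact (hinv (mh p)) (mx p)) x).
  pose (AgL := fun g : Gt G => forall B, In B L -> forall x, proj1_sig (vact (mh p) B) (hf (proj1_sig g) x) = proj1_sig B x).
  assert (O1 : G_top (fun g => N (Ginv g) /\ Agx g /\ AgL g)).
  { apply top_inter; [apply G_top_is; auto|auto|apply top_inter; [apply G_top_is; auto| |]].
    - apply G_agree; auto.
    - apply (G_list_open _ _ _ HGt L (fun B g => forall x, proj1_sig (vact (mh p) B) (hf (proj1_sig g) x) = proj1_sig B x)).
      intro B; apply G_agree; auto. }
  exists (Nb X tX G p (mx p :: map (vact (mh p)) L) (fun g => N (Ginv g) /\ Agx g /\ AgL g)).
  split; [apply Nb_open; auto|].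
  split. { apply Nb_self. split; [auto|split].
    - intro x; reflexivity.
    - intros B _ x; rewrite vact_val; unfold mh; rewrite hgf; auto. }
  intros p' [E1 [E2 [E3 [E4 [E5 E6]]]]]. apply Hsub.
  assert (V1 : vact (hinv (mh p')) (mx p') = vact (hinv (mh p)) (mx p)) by (rewrite E2; apply agree_vinv; apply E5).
  assert (V2 : forall B, In B L -> vact (mh p') B = vact (mh p) B)
    by (intros B HB; apply agree_vact; apply E6; auto).
  split; [|split; [|split]].
  - rewrite !ma_inv, E1, E2, (E3 _ (or_introl eq_refl)); auto.
  - rewrite !mx_inv, V1; auto.
  - intros B HB. rewrite !mf_inv, !vsact_val, !vact_hinv2, V2 by auto.
    rewrite E3; auto. right; apply in_map; auto.
  - rewrite mg_inv; auto.
Qed.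

Lemma M_tg : is_topological_group (@Mmul X tX G) (@Minv X tX G) (@M_top X tX G).
Proof. split; [apply M_top_is; auto|split; [apply Mmul_cont|apply Minv_cont]]. Qed.

Lemma M_haus : hausdorff (@M_top X tX G).
Proof.
  intros p q Hne.
  destruct (classic (ma p = ma q)) as [Ea|Ea].
  2:{ exists (Nb X tX G p nil (fun _ => True)), (Nb X tX G q nil (fun _ => True)).
      split; [apply Nb_open, Gtrue|split; [apply Nb_open, Gtrue|]].
      split; [apply Nb_self; auto|split; [apply Nb_self; auto|]].
      intros z [H1 _] [H2 _]; apply Ea; rewrite <- H1, <- H2; auto. }
  destruct (classic (mx p = mx q)) as [Ex|Ex].
  2:{ exists (Nb X tX G p nil (fun _ => True)), (Nb X tX G q nil (fun _ => True)).
      split; [apply Nb_open, Gtrue|split; [apply Nb_open, Gtrue|]].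
      split; [apply Nb_self; auto|split; [apply Nb_self; auto|]].
      intros z [_ [H1 _]] [_ [H2 _]]; apply Ex; rewrite <- H1, <- H2; auto. }
  destruct (classic (mf p = mf q)) as [Ef|Ef].
  2:{ assert (HB : exists B, proj1_sig (mf p) B <> proj1_sig (mf q) B).
      { apply NNPP; intro H; apply Ef; apply Vs_eq; intro B; apply NNPP; intro H'; apply H; eauto. }
      destruct HB as [B HB].
      exists (Nb X tX G p (B :: nil) (fun _ => True)), (Nb X tX G q (B :: nil) (fun _ => True)).
      split; [apply Nb_open, Gtrue|split; [apply Nb_open, Gtrue|]].
      split; [apply Nb_self; auto|split; [apply Nb_self; auto|]].
      intros z [_ [_ [H1 _]]] [_ [_ [H2 _]]]; apply HB.
      rewrite <- (H1 B), <- (H2 B); auto; left; auto. }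
  destruct (classic (mg p = mg q)) as [Eg|Eg].
  { exfalso; apply Hne; apply Mt_eq; auto. }
  destruct (G_haus _ _ Hst G _ _ Eg) as [N1 [N2 [HN1 [HN2 [N1p [N2q Hd]]]]]].
  exists (Nb X tX G p nil N1), (Nb X tX G q nil N2).
  split; [apply Nb_open; auto|split; [apply Nb_open; auto|]].
  split; [apply Nb_self; auto|split; [apply Nb_self; auto|]].
  intros z [_ [_ [_ H1]]] [_ [_ [_ H2]]]; eauto.
Qed.

Lemma stab_vinv (B : V tX) (g : Gt G) : stab X tX G B g -> vact (hinv (proj1_sig g)) B = B.
Proof. intro H; apply V_eq; intro x; rewrite vact_val; simpl; apply H. Qed.
Lemma stab_vact (B : V tX) (g : Gt G) : stab X tX G B g -> vact (proj1_sig g) B = B.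
Proof. intro H; apply V_eq; intro x; rewrite vact_val; rewrite <- (H (hg _ x)); rewrite hfg; auto. Qed.

Hypothesis HGna : non_archimedean (@Gmul X tX G) (@Ginv X tX G) (@Gone X tX G) (@G_top X tX G).

Lemma M_na : non_archimedean (@Mmul X tX G) (@Minv X tX G) (@Mone X tX G) (@M_top X tX G).
Proof.
  intros U HU Ue.
  destruct (tau_nb _ _ _ _ _ HU Ue) as [L [N [HN [Nr Hsub]]]].
  destruct (HGna N HN Nr) as [W0 [HW0 [[W1 [Wm Wi]] W0N]]].
  pose (N'' := fun g => W0 g /\ forall B, In B L -> stab X tX G B g).
  assert (ON : G_top N'').
  { apply top_inter; [apply G_top_is; auto|auto|].
    apply (G_list_open _ _ _ HGt L (fun B g => stab X tX G B g)). intro B; apply G_agree; auto. }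
  exists (Nb X tX G (Mone G) L N''). split; [apply Nb_open; auto|split; [split; [|split]|]].
  - apply Nb_self. split; auto. intros B _ x; reflexivity.
  - intros u v [U1 [U2 [U3 [U4 U5]]]] [V1' [V2' [V3 [V4 V5]]]].
    rewrite ma_one in *; rewrite mx_one in *; rewrite mf_one in *.
    split; [|split; [|split]].
    + rewrite ma_mul, U1, V1', V2', vact_zero, vs_zero; auto.
    + rewrite mx_mul, U2, V2', vact_zero, vadd_0l; auto.
    + intros B HB. rewrite mf_mul, vsadd_val, vsact_val. unfold mh; rewrite stab_vinv by (apply U5; auto).
      rewrite U3, V3; auto.
    + rewrite mg_mul. split; [apply Wm; auto|].
      intros B HB x. unfold stab; simpl. rewrite (U5 B HB), (V5 B HB); auto.
  - intros u [U1 [U2 [U3 [U4 U5]]]].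
    rewrite ma_one in *; rewrite mx_one in *; rewrite mf_one in *.
    split; [|split; [|split]].
    + rewrite ma_inv, U1, U2, vs_zero; auto.
    + rewrite mx_inv, U2, vact_zero; auto.
    + intros B HB. rewrite mf_inv, vsact_val, vact_hinv2. unfold mh; rewrite stab_vact by (apply U5; auto). auto.
    + rewrite mg_inv. split; [apply Wi; auto|].
      intros B HB x. unfold stab; simpl. pose proof (U5 B HB (hg (proj1_sig (mg u)) x)) as H. rewrite hfg in H. auto.
  - intros u [U1 [U2 [U3 [U4 U5]]]]. apply Hsub. split; [|split; [|split]]; auto.
Qed.
End Tau2.

Unset Implicit Arguments.


Section Comp2.
Variables (X : Type) (tX : topology X) (G : hsubgroup tX).

Definition kh (h : Vs tX) : Mt G := ((false, vzero tX, h), Gone G).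
Definition vB (B : V tX) : Mt G := ((false, B, vszero tX), Gone G).
Definition comm (u v : Mt G) : Mt G := Mmul (Mmul u v) (Mmul (Minv u) (Minv v)).
Definition conj (v u : Mt G) : Mt G := Mmul (Mmul u v) (Minv u).
Definition ZK (q : Mt G) := ma q = true /\ mx q = vzero tX /\ mg q = Gone G.

Lemma ma_kh h : ma (kh h) = false. Proof. reflexivity. Qed.
Lemma mx_kh h : mx (kh h) = vzero tX. Proof. reflexivity. Qed.
Lemma mf_kh h : mf (kh h) = h. Proof. reflexivity. Qed.
Lemma mh_kh h : mh (kh h) = hid tX. Proof. reflexivity. Qed.
Lemma mg_kh h : mg (kh h) = Gone G. Proof. reflexivity. Qed.
Lemma ma_vB h : ma (vB h) = false. Proof. reflexivity. Qed.
Lemma mx_vB h : mx (vB h) = h. Proof. reflexivity. Qed.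
Lemma mf_vB h : mf (vB h) = vszero tX. Proof. reflexivity. Qed.
Lemma mh_vB h : mh (vB h) = hid tX. Proof. reflexivity. Qed.
Lemma mg_vB h : mg (vB h) = Gone G. Proof. reflexivity. Qed.

Lemma comm_ZK (u : Mt G) (h : Vs tX) :
  proj1_sig h (vact (hinv (mh u)) (mx u)) = true -> ZK (comm u (kh h)).
Proof.
  intro Hh. unfold comm.
  split; [|split].
  - rewrite !ma_mul, !ma_inv, !mx_mul, !mx_inv, !mf_mul, !mf_inv, !mh_mul, !mh_inv,
      ma_kh, mx_kh, mf_kh, mh_kh.
    rewrite !vsadd_val, !vsact_val, !vact_zero, !vs_zero, vadd_0r.
    replace (vact (hcomp (mh u) (hid tX)) (vact (hinv (mh u)) (mx u))) with (mx u)
      by (apply V_eq; intro x; rewrite !vact_val; simpl; rewrite hfg; auto).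
    rewrite Hh; btauto.
  - rewrite !mx_mul, !mx_inv, !mh_mul, !mh_inv, mx_kh, mh_kh, !vact_zero, vadd_0r, vadd_0r.
    apply V_eq; intro x; rewrite !vadd_val, !vact_val; simpl; rewrite hfg. btauto.
  - rewrite !mg_mul, !mg_inv, mg_kh, Ginv_one, Gmul_1r, Gmul_1r, Gmul_inv_r; auto.
Qed.

Lemma conj_x (C : V tX) (u : Mt G) x :
  proj1_sig (mx (Mmul (Minv (vB C)) (conj (vB C) u))) x = xorb (proj1_sig C x) (proj1_sig C (hg (mh u) x)).
Proof.
  unfold conj. rewrite !mx_mul, !mx_inv, !mh_mul, !mh_inv, mx_vB, mh_vB.
  rewrite !vadd_val, !vact_val. simpl. rewrite hfg. btauto.
Qed.

Lemma conj_a (B : V tX) (u : Mt G) : vact (mh u) B = B ->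
  ma (Mmul (Minv (vB B)) (conj (vB B) u)) = proj1_sig (mf u) B.
Proof.
  intro HB. unfold conj.
  rewrite !ma_mul, !ma_inv, !mx_mul, !mx_inv, !mf_mul, !mf_inv, !mh_mul, !mh_inv,
      ma_vB, mx_vB, mf_vB, mh_vB.
  rewrite !vsadd_val, !vsact_val, !vszero_val, HB.
  replace (vact (hcomp (mh u) (hid tX)) (vact (hinv (mh u)) (mx u))) with (mx u)
      by (apply V_eq; intro x; rewrite !vact_val; simpl; rewrite hfg; auto).
  btauto.
Qed.
End Comp2.

Unset Implicit Arguments.


Section Min.
Variables (X : Type) (tX : topology X) (G : hsubgroup tX).
Hypothesis Hst : stone_space (open tX).
Hypothesis HGt : is_topological_group (@Gmul X tX G) (@Ginv X tX G) (@G_top X tX G).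
Variable S : set (set (Mt G)).
Hypothesis HSt : is_topological_group (@Mmul X tX G) (@Minv X tX G) S.
Hypothesis HSsub : forall U, S U -> M_top U.
Hypothesis HSh : hausdorff S.

Definition zh (h : Vs tX) : Mt G := ((true, vzero tX, h), Gone G).

Lemma S_top : is_topology S.
Proof. exact (tg_top HSt). Qed.

Lemma stepZ : exists U0, S U0 /\ U0 (Mone G) /\ forall q, ZK X tX G q -> ~ U0 q.
Proof.
  destruct (Vs_compact (fun h L => exists A, S A /\ A (Mone G) /\ forall h', agree h' h L -> ~ A (zh h')))
    as [l [Hl1 Hl2]].
  { intro h.
    assert (Hne : Mone G <> zh h) by (intro E; apply (f_equal (@ma X tX G)) in E; discriminate).
    destruct (HSh _ _ Hne) as [A [B [SA [SB [Ae [Bz Hd]]]]]].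
    destruct (tau_nb _ _ _ _ _ (HSsub _ SB) Bz) as [L [N [HN [Nz HB]]]].
    exists L, A; split; [auto|split; [auto|]].
    intros h' Ha Ah'. apply (Hd (zh h')); auto. apply HB.
    split; [auto|split; [auto|split; [|auto]]].
    intros B0 HB0. apply Ha; auto. }
  destruct (list_inter (O := S) (e := Mone G) (fun p A => forall h', agree h' (fst p) (snd p) -> ~ A (zh h')) l S_top)
    as [U0 [SU0 [U0e HU0]]].
  { intros p A B HAB HA h' Hh' Bz; apply (HA h' Hh'); auto. }
  { intros p Hp; apply Hl1; auto. }
  exists U0; split; [auto|split; [auto|]].
  intros q [Q1 [Q2 Q3]] Uq. destruct (Hl2 (mf q)) as [p [Hp Ap]].
  apply (HU0 p Hp (mf q) Ap). replace (zh (mf q)) with q; auto. apply Mt_eq; auto.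
Qed.

Lemma stepX : exists Wx, S Wx /\ Wx (Mone G) /\ forall u, Wx u -> mx u = vzero tX.
Proof.
  destruct stepZ as [U0 [SU0 [U0e HU0]]].
  destruct (Vs_compact (fun h L => exists A, S A /\ A (Mone G) /\ forall h', agree h' h L ->
      forall u, A u -> U0 (comm X tX G u (kh X tX G h'))))
    as [l [Hl1 Hl2]].
  { intro h.
    assert (Ec : comm X tX G (Mone G) (kh X tX G h) = Mone G).
    { unfold comm. rewrite Minv_one, !Mmul_1l, Mmul_Vr; auto. }
    destruct (comm_at HSt U0 (Mone G) (kh X tX G h) SU0) as [A [B [SA [SB [Ae [Bk HAB]]]]]].
    { unfold comm in Ec; rewrite Ec; auto. }
    destruct (tau_nb _ _ _ _ _ (HSsub _ SB) Bk) as [L [N [HN [Nk HB]]]].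
    exists L, A; split; [auto|split; [auto|]].
    intros h' Ha u Au. apply HAB; auto. apply HB.
    split; [auto|split; [auto|split; [|auto]]].
    intros B0 HB0. apply Ha; auto. }
  destruct (list_inter (O := S) (e := Mone G) (fun p A => forall h', agree h' (fst p) (snd p) ->
      forall u, A u -> U0 (comm X tX G u (kh X tX G h'))) l S_top)
    as [Wx [SWx [Wxe HWx]]].
  { intros p A B HAB HA h' Hh' u Bu; apply (HA h' Hh'); auto. }
  { intros p Hp; apply Hl1; auto. }
  exists Wx; split; [auto|split; [auto|]].
  intros u Wu. apply NNPP; intro Hne.
  assert (Hc : exists x0, proj1_sig (vact (hinv (mh u)) (mx u)) x0 = true).
  { apply NNPP; intro H. apply Hne. apply V_eq; intro x.
    rewrite vzero_val.
    destruct (proj1_sig (mx u) x) eqn:E; auto.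
    exfalso; apply H. exists (hg (mh u) x). rewrite vact_val. simpl. rewrite hfg; auto. }
  destruct Hc as [x0 Hx0].
  pose (ev := exist (fun f : V tX -> bool => forall A B, f (vadd A B) = xorb (f A) (f B))
              (fun B => proj1_sig B x0) (fun A B => eq_refl)).
  destruct (Hl2 ev) as [p [Hp Ap]].
  apply (HU0 _ (comm_ZK X tX G u ev Hx0)).
  apply (HWx p Hp ev Ap u Wu).
Qed.


Lemma stepG (C : V tX) : exists W, S W /\ W (Mone G) /\ forall u, W u -> stab X tX G C (mg u).
Proof.
  destruct stepX as [Wx [SWx [Wxe HWx]]].
  pose (v := vB X tX G C).
  pose (T := fun q => Wx (Mmul (Minv v) q)).
  assert (ST : S T) by (apply (ltrans_open HSt); auto).
  destruct (conj_at HSt T v (Mone G) ST) as [A [SA [Ae HA]]].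
  { unfold T. rewrite Minv_one, Mmul_1l, Mmul_1r, Mmul_Vl; auto. }
  exists A; split; [auto|split; [auto|]].
  intros u Au x. pose proof (HA u Au) as H. unfold T in H. apply HWx in H.
  pose proof (conj_x X tX G C u (hf (mh u) x)) as E. unfold conj in E. fold v in E.
  rewrite H, vzero_val, hgf in E.
  change (proj1_sig C (hf (mh u) x) = proj1_sig C x).
  destruct (proj1_sig C (hf (mh u) x)), (proj1_sig C x); simpl in E; auto; discriminate.
Qed.

Lemma stepCs (Cs : list (V tX)) : exists W, S W /\ W (Mone G) /\ forall u, W u -> forall C, In C Cs -> stab X tX G C (mg u).
Proof.
  destruct (list_inter (O := S) (e := Mone G) (fun C A => forall u, A u -> stab X tX G C (mg u)) Cs S_top)
    as [W [SW [We HW]]].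
  { intros C A B HAB HA u Bu; apply HA; auto. }
  { intros C _; apply stepG. }
  exists W; split; [auto|split; [auto|]]. intros u Wu C HC; apply (HW C HC); auto.
Qed.

Lemma stepN (N : set (Gt G)) : G_top N -> N (Gone G) -> exists W, S W /\ W (Mone G) /\ forall u, W u -> N (mg u).
Proof.
  intros HN N1. destruct (G_nbhd _ _ Hst G N HN N1) as [Cs HCs].
  destruct (stepCs Cs) as [W [SW [We HW]]].
  exists W; split; [auto|split; [auto|]]. intros u Wu; apply HCs; apply HW; auto.
Qed.

Lemma stepA : exists Wa, S Wa /\ Wa (Mone G) /\ forall u, Wa u -> ma u = false.
Proof.
  destruct stepZ as [U0 [SU0 [U0e HU0]]].
  destruct stepX as [Wx [SWx [Wxe HWx]]].
  destruct (mul_at HSt U0 (Mone G) (Mone G) SU0) as [A1 [A2 [SA1 [SA2 [A1e [A2e H12]]]]]].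
  { rewrite Mmul_1l; auto. }
  destruct (tau_nb _ _ _ _ _ (HSsub _ SA2) A2e) as [L [N [HN [Ne Hsub2]]]].
  assert (HN' : G_top (fun g => N (Ginv g))) by (destruct HGt as [_ [_ Hi]]; apply Hi; auto).
  destruct (stepN (fun g => N (Ginv g)) HN') as [Wn [SWn [Wne HWn]]].
  { simpl. rewrite Ginv_one; auto. }
  exists (fun u => A1 u /\ Wx u /\ Wn u).
  split; [apply top_inter; [apply S_top|auto|apply top_inter; [apply S_top|auto|auto]]|].
  split; [split; auto|].
  intros u [A1u [Wxu Wnu]]. apply NNPP; intro Ha. apply not_false_iff_true in Ha.
  pose (v := ((false, vzero tX, vszero tX), Ginv (mg u)) : Mt G).
  assert (A2v : A2 v).
  { apply Hsub2. split; [reflexivity|split; [reflexivity|split; [intros; reflexivity|]]].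
    apply HWn; auto. }
  apply (HU0 (Mmul u v)); [|apply H12; auto].
  split; [|split].
  - rewrite ma_mul, Ha. change (ma v) with false. change (mx v) with (vzero tX).
    rewrite vact_zero, vs_zero; auto.
  - rewrite mx_mul, HWx by auto. change (mx v) with (vzero tX). rewrite vact_zero, vadd_0l; auto.
  - rewrite mg_mul. change (mg v) with (Ginv (mg u)). apply Gmul_inv_r.
Qed.

Lemma stepB (B : V tX) : exists W, S W /\ W (Mone G) /\ forall u, W u -> proj1_sig (mf u) B = false.
Proof.
  destruct stepA as [Wa [SWa [Wae HWa]]].
  destruct (stepG B) as [Wg [SWg [Wge HWg]]].
  pose (v := vB X tX G B).
  pose (T := fun q => Wa (Mmul (Minv v) q)).
  assert (ST : S T) by (apply (ltrans_open HSt); auto).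
  destruct (conj_at HSt T v (Mone G) ST) as [A [SA [Ae HA]]].
  { unfold T. rewrite Minv_one, Mmul_1l, Mmul_1r, Mmul_Vl; auto. }
  exists (fun u => A u /\ Wg u); split; [apply top_inter; [apply S_top|auto|auto]|].
  split; [split; auto|].
  intros u [Au Wu]. pose proof (HA u Au) as H. unfold T in H. apply HWa in H.
  rewrite <- (conj_a X tX G B u); [exact H|].
  apply (stab_vact X tX G B (mg u)); auto.
Qed.

Lemma main_nb (L : list (V tX)) (N : set (Gt G)) : G_top N -> N (Gone G) ->
  exists W, S W /\ W (Mone G) /\ forall u, W u -> Nb X tX G (Mone G) L N u.
Proof.
  intros HN N1.
  destruct stepA as [Wa [SWa [Wae HWa]]].
  destruct stepX as [Wx [SWx [Wxe HWx]]].
  destruct (stepN N HN N1) as [Wn [SWn [Wne HWn]]].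
  destruct (list_inter (O := S) (e := Mone G) (fun B A => forall u, A u -> proj1_sig (mf u) B = false) L S_top)
    as [Wl [SWl [Wle HWl]]].
  { intros C A B HAB HA u Bu; apply HA; auto. }
  { intros C _; apply stepB. }
  exists (fun u => Wa u /\ Wx u /\ Wn u /\ Wl u).
  split. { repeat (apply top_inter; [apply S_top|auto|]); auto. }
  split; [repeat split; auto|].
  intros u [H1 [H2 [H3 H4]]]. split; [|split; [|split]].
  - rewrite ma_one; auto.
  - rewrite mx_one; auto.
  - intros B HB. rewrite mf_one, vszero_val. apply (HWl B HB); auto.
  - auto.
Qed.

Lemma finer : forall U, M_top U -> S U.
Proof.
  intros U HU. apply top_local; [apply S_top|]. intros p Up.
  pose proof (M_tg X tX G Hst HGt) as Htau.
  assert (HU' : M_top (fun q => U (Mmul p q))) by (apply (ltrans_open Htau); auto).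
  destruct (tau_nb _ _ _ _ (Mone G) HU') as [L [N [HN [Ne Hs]]]].
  { simpl. rewrite Mmul_1r; auto. }
  destruct (main_nb L N HN Ne) as [W [SW [We HW]]].
  exists (fun y => W (Mmul (Minv p) y)). split; [apply (ltrans_open HSt); auto|].
  split; [rewrite Mmul_Vl; auto|].
  intros y Wy. apply HW, Hs in Wy. rewrite Mmul_cancel in Wy; auto.
Qed.

End Min.


Theorem theorem4p4 (X : Type) (tX : topology X) (G : hsubgroup tX) :
  stone_space (open tX) ->
  is_topological_group (@Gmul X tX G) (@Ginv X tX G) (@G_top X tX G) ->
  non_archimedean (@Gmul X tX G) (@Ginv X tX G) (@Gone X tX G) (@G_top X tX G) ->
  non_archimedean (@Mmul X tX G) (@Minv X tX G) (@Mone X tX G) (@M_top X tX G) /\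
  minimal_group (@Mmul X tX G) (@Minv X tX G) (@M_top X tX G).
Proof.
  intros Hst HGt HGna. split.
  - exact (M_na X tX G Hst HGt HGna).
  - split; [exact (M_tg X tX G Hst HGt)|split; [exact (M_haus X tX G Hst HGt)|]].
    intros O' HO Hsub Htg Hh U HU.
    exact (finer X tX G Hst HGt O' Htg Hsub Hh U HU).
Qed.
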